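(* Let $P=\{(u_1,v_1),\ldots,(u_n,v_n)\}\subseteq\{a,b\}^*\times\{a,b\}^*$ with $n\ge 3$, and let $W\subseteq F(\Gamma)\times F(\Gamma)$ be the set of pairs constructed from $P$ as described in the context. If $P$ has a solution as an instance of Restricted PCP, then $W$ has a solution as an instance of the Identity Correspondence Problem, i.e. there is a nonempty finite sequence of pairs from $W$ whose componentwise product in $F(\Gamma)\times F(\Gamma)$ equals $(\varepsilon,\varepsilon)$.
   Context: For a set $H$, $F(H)$ denotes the free group on $H$; $\varepsilon$ is its identity (the empty word), and pairs of elements of free groups are multiplied componentwise. Restricted PCP: given $P=\{(u_1,v_1),\ldots,(u_n,v_n)\}\subseteq\{a,b\}^*\times\{a,b\}^*$ with $n\ge3$, a solution is a finite (possibly empty) sequence $l_1,\ldots,l_k$ with $2\le l_i\le n-1$ such that $u_1u_{l_1}\cdots u_{l_k}u_n=v_1v_{l_1}\cdots v_{l_k}v_n$. Construction of $W$. Let $\Gamma_i=\{a_i,b_i\}$ for $1\le i\le4$ and $\Gamma_B=\{x_1,\ldots,x_8\}$ be pairwise disjoint sets of letters, and $\Gamma=\Gamma_1\cup\Gamma_2\cup\Gamma_3\cup\Gamma_4\cup\Gamma_B$. Let $\delta_i:F(\{a,b\})\to F(\Gamma_i)$ be the homomorphism with $\delta_i(a)=a_i$, $\delta_i(b)=b_i$, and set $u_{ik}=\delta_i(u_k)$, $v_{ik}=\delta_i(v_k)$. For a positive integer $j$ let $\phi_i(j)=a_i^jb_i$ and $\psi_i(j)=(a_i^{-1})^jb_i^{-1}$.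 Put $x_0:=x_8$. For $p=1,2,3,4$ define $W_{4(p-1)}=\{(x_{2p-2}\,v_{p1}^{-1}u_{p1}\,x_{2p-1}^{-1},\; x_{2p-2}\,b_p\,x_{2p-1}^{-1})\}$, $W_{4(p-1)+1}=\{(x_{2p-1}\,u_{pj}\,x_{2p-1}^{-1},\; x_{2p-1}\,\phi_p(j)\,x_{2p-1}^{-1}) : 2\le j\le n-1\}$, $W_{4(p-1)+2}=\{(x_{2p-1}\,u_{pn}v_{pn}^{-1}\,x_{2p}^{-1},\; x_{2p-1}\,b_p^{-1}\,x_{2p}^{-1})\}$, $W_{4(p-1)+3}=\{(x_{2p}\,v_{pj}^{-1}\,x_{2p}^{-1},\; x_{2p}\,\psi_p(j)\,x_{2p}^{-1}) : 2\le j\le n-1\}$, and $W=W_0\cup W_1\cup\cdots\cup W_{15}$ (a set of $8(n-1)$ pairs). *)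

(* Defs.v *)
From HB Require Import structures.
From mathcomp Require Import all_boot.
Set Implicit Arguments. Unset Strict Implicit. Unset Printing Implicit Defensive.

Inductive ab := ltr_a | ltr_b.

(* An instance P = [(u_1,v_1);...;(u_n,v_n)] is a list; u_k = nth _ P (k-1). *)
Definition pcp_u (P : seq (seq ab * seq ab)) (k : nat) : seq ab :=
  (nth ([::], [::]) P k.-1).1.
Definition pcp_v (P : seq (seq ab * seq ab)) (k : nat) : seq ab :=
  (nth ([::], [::]) P k.-1).2.

Definition restricted_pcp_solution (P : seq (seq ab * seq ab)) (ls : seq nat) : Prop :=
  let n := size P in
  (forall l, l \in ls -> 2 <= l <= n.-1) /\
  pcp_u P 1 ++ flatten (map (pcp_u P) ls) ++ pcp_u P n =
  pcp_v P 1 ++ flatten (map (pcp_v P) ls) ++ pcp_v P n.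

(* Letters of Gamma: a_i, b_i (i = 1..4) and x_k (k = 1..8). *)
Inductive letter := La of nat | Lb of nat | Lx of nat.

Definition letter_eqb (x y : letter) : bool :=
  match x, y with
  | La i, La j => i == j
  | Lb i, Lb j => i == j
  | Lx i, Lx j => i == j
  | _, _ => false
  end.

Lemma letter_eqP : Equality.axiom letter_eqb.
Proof.
case=> [i|i|i] [j|j|j] /=; try by constructor.
all: by apply: (iffP eqP) => [->|[]].
Qed.

HB.instance Definition _ := hasDecEq.Build letter letter_eqP.

(* A generator-or-inverse: (x, false) is x, (x, true) is x^{-1}. *)
Definition gen := (letter * bool)%type.
(* Words over Gamma ∪ Gamma^{-1}; elements of F(Gamma) are represented by words,
   and two words represent the same element iff their free reductions agree. *)
Definition word := seq gen.

Definition ginv (g : gen) : gen := (g.1, ~~ g.2).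

Definition fred (w : word) : word :=
  foldr (fun g acc => match acc with
                      | h :: t => if h == ginv g then t else g :: acc
                      | [::] => [:: g]
                      end) [::] w.

Definition winv (w : word) : word := rev (map ginv w).

Definition lw (x : letter) : word := [:: (x, false)].

Definition delta (p : nat) (w : seq ab) : word :=
  map (fun c => match c with ltr_a => (La p, false) | ltr_b => (Lb p, false) end) w.

Definition uw (P : seq (seq ab * seq ab)) (p k : nat) : word := delta p (pcp_u P k).
Definition vw (P : seq (seq ab * seq ab)) (p k : nat) : word := delta p (pcp_v P k).

Definition phi (p j : nat) : word := nseq j (La p, false) ++ lw (Lb p).
Definition psi (p j : nat) : word := nseq j (La p, true) ++ [:: (Lb p, true)].

(* x_k with the convention x_0 := x_8. *)
Definition xw (k : nat) : word := lw (Lx (if k == 0 then 8 else k)).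

(* membership in W = W_0 ∪ ... ∪ W_15 (blocks W_{4(p-1)+r}, p = 1..4, r = 0..3) *)
Definition inW (P : seq (seq ab * seq ab)) (pr : word * word) : Prop :=
  let n := size P in
  exists2 p, 1 <= p <= 4 &
  [\/ pr = (xw (2*p-2) ++ winv (vw P p 1) ++ uw P p 1 ++ winv (xw (2*p-1)),
            xw (2*p-2) ++ lw (Lb p) ++ winv (xw (2*p-1))),
      (exists2 j, 2 <= j <= n.-1 &
         pr = (xw (2*p-1) ++ uw P p j ++ winv (xw (2*p-1)),
               xw (2*p-1) ++ phi p j ++ winv (xw (2*p-1)))),
      pr = (xw (2*p-1) ++ uw P p n ++ winv (vw P p n) ++ winv (xw (2*p)),
            xw (2*p-1) ++ winv (lw (Lb p)) ++ winv (xw (2*p)))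
    | (exists2 j, 2 <= j <= n.-1 &
         pr = (xw (2*p) ++ winv (vw P p j) ++ winv (xw (2*p)),
               xw (2*p) ++ psi p j ++ winv (xw (2*p))))].

Definition icp_solution (inS : word * word -> Prop) (s : seq (word * word)) : Prop :=
  [/\ s != [::], (forall pr, pr \in s -> inS pr),
      fred (flatten (map fst s)) = [::] & fred (flatten (map snd s)) = [::]].

(* Main.v *)
Require Import Defs.
From mathcomp Require Import all_boot.
From Stdlib Require Import Setoid Morphisms.

Definition step (g : gen) (acc : word) : word :=
  match acc with
  | h :: t => if h == ginv g then t else g :: acc
  | [::] => [:: g]
  end.

Lemma fred_cat u v : fred (u ++ v) = foldr step (fred v) u.
Proof. by rewrite /fred foldr_cat. Qed.

Fixpoint reduced (w : word) : bool :=
  match w with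
  | g :: ((h :: _) as t) => (h != ginv g) && reduced t
  | _ => true
  end.

Lemma ginvK : involutive ginv.
Proof. by case=> x []. Qed.

Lemma reduced_step g r : reduced r -> reduced (step g r).
Proof.
case: r => [|h t] //= Hr.
case: ifP => Hh.
  by case: t Hr => [|h' t'] //= /andP[].
by rewrite /= Hh.
Qed.

Lemma reduced_foldr r w : reduced r -> reduced (foldr step r w).
Proof. by elim: w => [|g w IH] //= Hr; apply: reduced_step; apply: IH. Qed.

Lemma reduced_fred v : reduced (fred v).
Proof. exact: (@reduced_foldr [::]). Qed.

Lemma step_inv g r : reduced r -> step g (step (ginv g) r) = r.
Proof.
case: r => [|h t] /=; first by rewrite eqxx.
rewrite ginvK; case: eqP => [->|Hne] Hr.
  case: t Hr => [|h' t'] //= /andP[Hh _].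
  by rewrite (negbTE Hh).
by rewrite /= eqxx.
Qed.

Lemma winv_cons g w : winv (g :: w) = winv w ++ [:: ginv g].
Proof. by rewrite /winv /= rev_cons cats1. Qed.

Lemma F_winv w r : reduced r -> foldr step r (w ++ winv w) = r.
Proof.
elim: w r => [|g w IH] r Hr //=.
rewrite winv_cons catA foldr_cat /= IH; first exact: step_inv.
exact: reduced_step.
Qed.

Lemma winv_cat a b : winv (a ++ b) = winv b ++ winv a.
Proof. by rewrite /winv map_cat rev_cat. Qed.

Lemma winvK : involutive winv.
Proof. by move=> w; rewrite /winv map_rev revK (mapK ginvK). Qed.

Definition eqv (x y : word) : Prop := forall u v, fred (u ++ x ++ v) = fred (u ++ y ++ v).

#[local] Instance eqv_Equiv : Equivalence eqv.
Proof.
split.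
- by move=> x u v.
- by move=> x y H u v; rewrite H.
- by move=> x y z H1 H2 u v; rewrite H1 H2.
Qed.

#[local] Instance cat_Proper : Proper (eqv ==> eqv ==> eqv) (@cat gen).
Proof.
move=> x y Hxy z t Hzt u v.
rewrite -!catA Hxy.
have := Hzt (u ++ y) v; rewrite -!catA => ->. done.
Qed.

Lemma cancel_l w v : eqv (w ++ winv w ++ v) v.
Proof.
move=> a b.
rewrite -!catA (catA w) fred_cat [fred ((w ++ _) ++ _)]fred_cat F_winv //.
  by rewrite -fred_cat.
exact: reduced_fred.
Qed.

Lemma cancel_r w v : eqv (winv w ++ w ++ v) v.
Proof. by have := cancel_l (winv w) v; rewrite winvK. Qed.

Lemma eqv_nil x : eqv x [::] -> fred x = [::].
Proof. by move=> H; have := H [::] [::]; rewrite /= !cats0. Qed.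

Lemma tele (f : nat -> word) X L Z :
  eqv (winv X ++ flatten (map (fun j => X ++ f j ++ winv X) L) ++ Z)
      (flatten (map f L) ++ winv X ++ Z).
Proof.
elim: L => [|j L IH] /=; first reflexivity.
rewrite -!catA cancel_r IH; reflexivity.
Qed.

Lemma flatten_winv_rev (f : nat -> word) L :
  flatten (map (fun j => winv (f j)) (rev L)) = winv (flatten (map f L)).
Proof.
elim: L => [|j L IH] //=.
by rewrite rev_cons map_rcons -cats1 flatten_cat IH winv_cat /= cats0.
Qed.

Lemma winv_psi p j : winv (psi p j) = lw (Lb p) ++ nseq j (La p, false).
Proof. by rewrite /winv /psi map_cat rev_cat map_nseq rev_nseq. Qed.

Lemma phi_shift p L :
  lw (Lb p) ++ flatten (map (phi p) L) =
  flatten (map (fun j => winv (psi p j)) L) ++ lw (Lb p).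
Proof.
elim: L => [|j L IH] //=.
by rewrite winv_psi /phi -!catA IH.
Qed.

Lemma phipsi p L Z :
  eqv (lw (Lb p) ++ flatten (map (phi p) L) ++ winv (lw (Lb p)) ++
       flatten (map (psi p) (rev L)) ++ Z) Z.
Proof.
rewrite catA phi_shift -!catA cancel_l.
have -> : flatten (map (psi p) (rev L)) =
          flatten (map (fun j => winv (winv (psi p j))) (rev L)).
  by apply: congr1; apply: eq_map => j; rewrite winvK.
rewrite flatten_winv_rev cancel_l; reflexivity.
Qed.

Lemma flatten_cons1 (T : Type) (x : seq T) s : flatten (x :: s) = x ++ flatten s.
Proof. by []. Qed.

Lemma delta_cat p a b : delta p (a ++ b) = delta p a ++ delta p b.
Proof. exact: map_cat. Qed.

Lemma flatten_delta p (g : nat -> seq ab) L :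
  flatten (map (fun k => delta p (g k)) L) = delta p (flatten (map g L)).
Proof. by elim: L => [|k L IH] //=; rewrite delta_cat IH. Qed.

Section Blocks.
Variables (P : seq (seq ab * seq ab)) (ls : seq nat).

Definition pA p := (xw (2*p-2) ++ winv (vw P p 1) ++ uw P p 1 ++ winv (xw (2*p-1)),
            xw (2*p-2) ++ lw (Lb p) ++ winv (xw (2*p-1))).
Definition pB p j := (xw (2*p-1) ++ uw P p j ++ winv (xw (2*p-1)),
               xw (2*p-1) ++ phi p j ++ winv (xw (2*p-1))).
Definition pC p := (xw (2*p-1) ++ uw P p (size P) ++ winv (vw P p (size P)) ++ winv (xw (2*p)),
            xw (2*p-1) ++ winv (lw (Lb p)) ++ winv (xw (2*p))).
Definition pD p j := (xw (2*p) ++ winv (vw P p j) ++ winv (xw (2*p)),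
               xw (2*p) ++ psi p j ++ winv (xw (2*p))).

Definition block p := pA p :: map (pB p) ls ++ pC p :: map (pD p) (rev ls).

Lemma block_snd_eq p : flatten (map snd (block p)) =
  (xw (2*p-2) ++ lw (Lb p) ++ winv (xw (2*p-1))) ++
  flatten (map (fun j => xw (2*p-1) ++ phi p j ++ winv (xw (2*p-1))) ls) ++
  (xw (2*p-1) ++ winv (lw (Lb p)) ++ winv (xw (2*p))) ++
  flatten (map (fun j => xw (2*p) ++ psi p j ++ winv (xw (2*p))) (rev ls)).
Proof. by rewrite /block map_cons map_cat map_cons !flatten_cons1 flatten_cat flatten_cons1 -!map_comp. Qed.

Lemma block_fst_eq p : flatten (map fst (block p)) =
  (xw (2*p-2) ++ winv (vw P p 1) ++ uw P p 1 ++ winv (xw (2*p-1))) ++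
  flatten (map (fun j => xw (2*p-1) ++ uw P p j ++ winv (xw (2*p-1))) ls) ++
  (xw (2*p-1) ++ uw P p (size P) ++ winv (vw P p (size P)) ++ winv (xw (2*p))) ++
  flatten (map (fun j => xw (2*p) ++ winv (vw P p j) ++ winv (xw (2*p))) (rev ls)).
Proof. by rewrite /block map_cons map_cat map_cons !flatten_cons1 flatten_cat flatten_cons1 -!map_comp. Qed.

Lemma block_snd p Z :
  eqv (flatten (map snd (block p)) ++ Z) (xw (2*p-2) ++ winv (xw (2*p)) ++ Z).
Proof.
rewrite block_snd_eq.
rewrite -?catA tele -?catA.
rewrite cancel_r tele phipsi; reflexivity.
Qed.

Hypothesis Hsol : pcp_u P 1 ++ flatten (map (pcp_u P) ls) ++ pcp_u P (size P) =
  pcp_v P 1 ++ flatten (map (pcp_v P) ls) ++ pcp_v P (size P).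

Lemma block_fst p Z :
  eqv (flatten (map fst (block p)) ++ Z) (xw (2*p-2) ++ winv (xw (2*p)) ++ Z).
Proof.
rewrite block_fst_eq.
rewrite -?catA tele -?catA.
rewrite cancel_r tele (flatten_winv_rev (vw P p)).
have E R : uw P p 1 ++ flatten (map (uw P p) ls) ++ uw P p (size P) ++ R =
         vw P p 1 ++ flatten (map (vw P p) ls) ++ vw P p (size P) ++ R.
  have := congr1 (fun x => delta p x ++ R) Hsol.
  by rewrite /= !delta_cat !flatten_delta -!catA.
rewrite E cancel_r cancel_l.
rewrite cancel_l; reflexivity.
Qed.
End Blocks.

Lemma block_in P ls p pr :
  (forall l, l \in ls -> 2 <= l <= (size P).-1) -> 1 <= p <= 4 ->
  pr \in block P ls p -> inW P pr.
Proof.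
move=> Hls Hp; rewrite /block inE mem_cat inE.
case/orP => [/eqP->|/orP[/mapP[j Hj ->]|/orP[/eqP->|/mapP[j Hj ->]]]];
  exists p => //.
- by apply: Or41.
- by apply: Or42; exists j; [apply: Hls|].
- by apply: Or43.
- by apply: Or44; exists j; [apply: Hls; rewrite -mem_rev|].
Qed.

Theorem mainTheorem1 (P : seq (seq ab * seq ab)) :
  3 <= size P ->
  (exists ls, restricted_pcp_solution P ls) ->
  exists s, icp_solution (inW P) s.
Proof.
move=> _ [ls [Hls Hsol]].
exists (block P ls 1 ++ block P ls 2 ++ block P ls 3 ++ block P ls 4).
split.
- by [].
- move=> pr; rewrite !mem_cat => /or4P[]; apply: block_in => //.
- apply: eqv_nil; rewrite !map_cat !flatten_cat -[flatten (map fst (block P ls 4))]cats0.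
  rewrite (@block_fst P ls Hsol 4 [::]) (@block_fst P ls Hsol 3) (@block_fst P ls Hsol 2) (@block_fst P ls Hsol 1).
  rewrite cancel_r cancel_r cancel_r.
  have -> : xw (2*1-2) = xw (2*4) by [].
  rewrite cancel_l; reflexivity.
- apply: eqv_nil; rewrite !map_cat !flatten_cat -[flatten (map snd (block P ls 4))]cats0.
  rewrite (block_snd P ls 4) (block_snd P ls 3) (block_snd P ls 2) (block_snd P ls 1).
  rewrite cancel_r cancel_r cancel_r.
  have -> : xw (2*1-2) = xw (2*4) by [].
  rewrite cancel_l; reflexivity.
Qed.
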